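(* Let $\Gamma,\Gamma'$ be type environments, $H$ a heap and $R$ a register file with $\Gamma\le\Gamma'$ and $\mathrm{Cons}(H,R,\Gamma)$. Then: (1) for every $x\in dom(\Gamma')$ and every $a\in dom(H)$, $\mathrm{own}(H,R(x),\Gamma(x))(a)\ge\mathrm{own}(H,R(x),\Gamma'(x))(a)$; (2) for every $a\in dom(H)$, $\mathrm{Own}(H,R,\Gamma')(a)\le 1$; (3) for all types $\tau,\tau'$ and values $v$, if $\Gamma\vdash\tau\le\tau'$ and $\mathrm{SATv}(H,R,v,\tau)$ then $\mathrm{SATv}(H,R,v,\tau')$; (4) $\mathrm{SAT}(H,R,\Gamma')$; (5) $\mathrm{Cons}(H,R,\Gamma')$.
   Context: Refinement formulas are first-order formulas over integer program variables, integer literals, a value variable $\nu$, atomic predicates of a fixed theory and context-prefix predicates; $\models\psi$ means $\psi$ is valid. Types $\tau ::= \{\nu:\mathtt{int}\mid\varphi\}\mid\tau\ \mathtt{ref}^r$, $r\in[0,1]$ rational. Values: integers or addresses. Heap $H$: finite partial map addresses $\to$ values; register file $R$: finite partial map variables $\to$ values; type environment $\Gamma$: finite map variables $\to$ types. $[R]\varphi$: $[\emptyset]\varphi=\varphi$, $[R\{x\mapsto n\}]\varphi=[R][n/x]\varphi$ ($n$ integer), $[R\{x\mapsto a\}]\varphi=[R]\varphi$ ($a$ address). $[\![\Gamma]\!]$: conjunction of $[x/\nu]\varphi$ over $x$ with $\Gamma(x)=\{\nu:\mathtt{int}\mid\varphi\}$. Subtyping: $\Gamma\vdash\{\nu:\mathtt{int}\mid\varphi_1\}\le\{\nu:\mathtt{int}\mid\varphi_2\}$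 iff $\models[\![\Gamma]\!]\wedge\varphi_1\Rightarrow\varphi_2$; $\Gamma\vdash\tau_1\ \mathtt{ref}^{r_1}\le\tau_2\ \mathtt{ref}^{r_2}$ iff $r_1\ge r_2$ and $\Gamma\vdash\tau_1\le\tau_2$; $\Gamma\le\Gamma'$ iff for each $x\in dom(\Gamma')$, $x\in dom(\Gamma)$ and $\Gamma\vdash\Gamma(x)\le\Gamma'(x)$. $\mathrm{SATv}(H,R,v,\tau)$: for $\tau=\{\nu:\mathtt{int}\mid\varphi\}$, $v\in\mathbb Z$ and $\models[R][v/\nu]\varphi$; for $\tau=\tau'\ \mathtt{ref}^r$, $v=a\in dom(H)$ and $\mathrm{SATv}(H,R,H(a),\tau')$. $\mathrm{SAT}(H,R,\Gamma)$ iff every $x\in dom(\Gamma)$ is in $dom(R)$ and $\mathrm{SATv}(H,R,R(x),\Gamma(x))$. Ownership maps are functions from addresses to nonnegative rationals, added pointwise; $\{a\mapsto r\}$ maps $a$ to $r$ and all else to 0; $\emptyset$ is the zero map. $\mathrm{own}(H,v,\tau)=\{a\mapsto r\}+\mathrm{own}(H,H(a),\tau')$ if $v=a\in dom(H)$ and $\tau=\tau'\ \mathtt{ref}^r$, and $\emptyset$ otherwise. $\mathrm{Own}(H,R,\Gamma)=\sum_{x\in dom(\Gamma)}\mathrm{own}(H,R(x),\Gamma(x))$. $\mathrm{Cons}(H,R,\Gamma)$ iff $\mathrm{SAT}(H,R,\Gamma)$ and $\mathrm{Own}(H,R,\Gamma)(a)\le 1$ for all $a\in dom(H)$. *)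

(* Defs.v *)
From HB Require Import structures.
From mathcomp Require Import all_boot all_order all_algebra.
From mathcomp Require Import finmap.
Set Implicit Arguments.
Unset Strict Implicit.
Unset Printing Implicit Defensive.
Import Order.TTheory GRing.Theory Num.Theory.
Local Open Scope ring_scope.
Local Open Scope fset_scope.
Local Open Scope fmap_scope.

Definition var := nat.
Definition addr := nat.

Inductive fvar := Nu | PV of var.

(* Refinement formulas, shallowly embedded: a formula is its meaning,
   a predicate on integer valuations of the formula variables (the
   atomic predicates of the fixed theory are interpreted in its model). *)
Definition valuation := fvar -> int.
Definition formula := valuation -> Prop.

Definition valid (psi : formula) : Prop := forall rho : valuation, psi rho.

Definition upd (rho : valuation) (y : fvar) (n : int) : valuation :=
  fun z => match y, z with
           | Nu, Nu => n
           | PV x, PV x' => if x == x' then n else rho z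
           | _, _ => rho z
           end.

Definition subst_int (y : fvar) (n : int) (phi : formula) : formula :=
  fun rho => phi (upd rho y n).

Definition subst_nu_var (x : var) (phi : formula) : formula :=
  fun rho => phi (upd rho Nu (rho (PV x))).

Inductive value := VInt of int | VAddr of addr.

Definition heap := {fmap addr -> value}.
Definition regfile := {fmap var -> value}.

(* This is the meaning
   of the recursive definition [R{x|->n}]phi = [R][n/x]phi,
   [R{x|->a}]phi = [R]phi. *)
Definition subst_R (R : regfile) (phi : formula) : formula :=
  fun rho => phi (fun z => match z with
                           | PV x => match R.[? x] with
                                     | Some (VInt n) => n
                                     | _ => rho z
                                     end
                           | Nu => rho z
                           end).

Definition frac := {r : rat | (0 <= r) && (r <= 1)}.
Definition fracv (r : frac) : rat := proj1_sig r.

Inductive ty :=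
| TInt of formula
| TRef of ty & frac.

Definition tyenv := {fmap var -> ty}.

Definition env_formula (G : tyenv) : formula :=
  fun rho => forall (x : var) (phi : formula),
      G.[? x] = Some (TInt phi) -> subst_nu_var x phi rho.

Fixpoint subty (G : tyenv) (t1 t2 : ty) : Prop :=
  match t1, t2 with
  | TInt phi1, TInt phi2 =>
      valid (fun rho => env_formula G rho /\ phi1 rho -> phi2 rho)
  | TRef t1' r1, TRef t2' r2 => fracv r2 <= fracv r1 /\ subty G t1' t2'
  | _, _ => False
  end.

Definition subenv (G G' : tyenv) : Prop :=
  forall x t', G'.[? x] = Some t' ->
    exists t, G.[? x] = Some t /\ subty G t t'.

Fixpoint SATv (H : heap) (R : regfile) (v : value) (t : ty) : Prop :=
  match t with
  | TInt phi => exists n : int, v = VInt n /\ valid (subst_R R (subst_int Nu n phi))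
  | TRef t' _ => exists a : addr, v = VAddr a /\
                 exists w, H.[? a] = Some w /\ SATv H R w t'
  end.

Definition SAT (H : heap) (R : regfile) (G : tyenv) : Prop :=
  forall x t, G.[? x] = Some t -> exists v, R.[? x] = Some v /\ SATv H R v t.

Definition ownmap := addr -> rat.
Definition own_empty : ownmap := fun _ => 0.
Definition own_single (a : addr) (r : rat) : ownmap :=
  fun b => if b == a then r else 0.
Definition own_add (m1 m2 : ownmap) : ownmap := fun b => (m1 b + m2 b)%R.

Fixpoint own (H : heap) (v : value) (t : ty) : ownmap :=
  match v, t with
  | VAddr a, TRef t' r =>
      match H.[? a] with
      | Some w => own_add (own_single a (fracv r)) (own H w t')
      | None => own_empty
      end
  | _, _ => own_empty
  end.

Definition ownR (H : heap) (R : regfile) (x : var) (t : ty) : ownmap :=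
  match R.[? x] with
  | Some v => own H v t
  | None => own_empty
  end.

Definition Own (H : heap) (R : regfile) (G : tyenv) : ownmap :=
  fun a => \sum_(x <- domf G)
             match G.[? x] with
             | Some t => ownR H R x t a
             | None => 0
             end.

Definition Consistent (H : heap) (R : regfile) (G : tyenv) : Prop :=
  SAT H R G /\ forall a, a \in domf H -> Own H R G a <= 1.

(* Main.v *)
Require Import Defs.
From mathcomp Require Import all_boot all_order all_algebra.
From mathcomp Require Import finmap.
From Stdlib Require Import FunctionalExtensionality.
Import Order.TTheory GRing.Theory Num.Theory.
Local Open Scope ring_scope.
Local Open Scope fset_scope.
Local Open Scope fmap_scope.

Lemma own_ge0 H v t a : 0 <= own H v t a.
Proof.
elim: t v => [phi|t IH r] [n|b] //=; rewrite /own_empty //.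
case: (H.[? b]) => [w|] //.
rewrite /own_add /own_single; apply: addr_ge0 => //.
case: ifP => // _; by case: r => r /= /andP[].
Qed.

Lemma ownR_ge0 H R x t a : 0 <= ownR H R x t a.
Proof. by rewrite /ownR; case: (R.[? x]) => // v; apply: own_ge0. Qed.

Lemma own_mono G H t t' v a : subty G t t' -> own H v t' a <= own H v t a.
Proof.
elim: t t' v => [phi|t IH r] [phi'|t' r'] [n|b] //=; rewrite /own_empty //.
move=> [Hr Hs]; case: (H.[? b]) => [w|] //.
rewrite /own_add /own_single; apply: lerD; last by apply: IH.
by case: ifP.
Qed.

Lemma sat_mono G H R t t' v : SAT H R G -> subty G t t' -> SATv H R v t -> SATv H R v t'.
Proof.
move=> Hsat.
elim: t t' v => [phi|t IH r] [phi'|t' r'] v //=.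
- move=> Hsub [n [-> Hv]]; exists n; split => // rho.
  apply: Hsub; split; last by apply: Hv.
  move=> x psi Gx.
  have [w [Rx Hw]] := Hsat _ _ Gx.
  case: Hw => [m [Ew Hm]]; subst w.
  rewrite /subst_nu_var /=.
  rewrite Rx.
  have := Hm rho. rewrite /subst_R /subst_int.
  congr psi; apply: functional_extensionality => z.
  by case: z.
- move=> [_ Hs] [b [-> [w [Hb Hw]]]]; exists b; split => //; exists w; split => //.
  by apply: IH.
Qed.

Theorem lemma12 (G G' : tyenv) (H : heap) (R : regfile) :
  subenv G G' -> Consistent H R G ->
  (* (1) *)
  (forall (x : var) (t t' : ty), G'.[? x] = Some t' -> G.[? x] = Some t ->
     forall a : addr, a \in domf H -> ownR H R x t' a <= ownR H R x t a) /\
  (* (2) *)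
  (forall a : addr, a \in domf H -> Own H R G' a <= 1) /\
  (* (3) *)
  (forall (t t' : ty) (v : value), subty G t t' -> SATv H R v t -> SATv H R v t') /\
  (* (4) *)
  SAT H R G' /\
  (* (5) *)
  Consistent H R G'.
Proof.
move=> Hsub [Hsat Hown].
have P1 : forall (x : var) (t t' : ty), G'.[? x] = Some t' -> G.[? x] = Some t ->
     forall a : addr, a \in domf H -> ownR H R x t' a <= ownR H R x t a.
  move=> x t t' G'x Gx a _.
  have [t0 [Gx0 Hst]] := Hsub _ _ G'x.
  rewrite Gx in Gx0; case: Gx0 => <- in Hst.
  rewrite /ownR; case: (R.[? x]) => // v; exact: own_mono Hst.
have P3 : forall (t t' : ty) (v : value), subty G t t' -> SATv H R v t -> SATv H R v t'.
  by move=> t t' v; apply: sat_mono.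
have P4 : SAT H R G'.
  move=> x t' G'x.
  have [t [Gx Hst]] := Hsub _ _ G'x.
  have [v [Rx Hv]] := Hsat _ _ Gx.
  by exists v; split => //; apply: P3 Hv.
have P2 : forall a : addr, a \in domf H -> Own H R G' a <= 1.
  move=> a Ha; apply: le_trans (Hown a Ha).
  rewrite /Own.
  set F := fun x => match G.[? x] with Some t => ownR H R x t a | None => 0 end.
  have Fge0 : forall x, 0 <= F x.
    by move=> x; rewrite /F; case: (G.[? x]) => // t; apply: ownR_ge0.
  rewrite -/F [X in _ <= X](bigID (fun x => x \in domf G')) /=.
  apply: (@le_trans _ _ (\sum_(x <- domf G | x \in domf G') F x)); last first.
    rewrite ler_wpDr //; apply: sumr_ge0 => x _; exact: Fge0.
  have Hperm : perm_eq [seq x <- domf G | x \in domf G'] (domf G').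
    apply: uniq_perm; first by apply: filter_uniq; apply: fset_uniq.
      by apply: fset_uniq.
    move=> x; rewrite mem_filter; apply/andP/idP => [[] //|xG'].
    split => //.
    have := xG'; rewrite -fndSome; case E: (G'.[? x]) => [t'|] // _.
    have [t [Gx _]] := Hsub _ _ E.
    by rewrite -fndSome Gx.
  rewrite -[X in _ <= X]big_filter (perm_big _ Hperm) /=.
  apply: ler_sum => x xG'.
  case E: (G'.[? x]) => [t'|]; last exact: Fge0.
  have [t [Gx _]] := Hsub _ _ E.
  rewrite /F Gx; exact: P1 E Gx a Ha.
by split => //; split => //; split => //; split => //; split.
Qed.
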